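(* Let $\mathcal{A}:\mathbb{R}^{n_1\times n_2}\to\mathbb{R}^m$ be linear, $R\ge1$, $\alpha,\beta>0$, $\hat X=\sum_{r=1}^R\hat u^r(\hat v^r)^T$ with $\hat u^r\in\mathbb{R}^{n_1}$, $\hat v^r\in\mathbb{R}^{n_2}$, $\eta\in\mathbb{R}^m$ and $y=\mathcal{A}(\hat X)+\eta$. Let $(u^1_{\alpha,\beta},\dots,v^R_{\alpha,\beta})$ be a global minimizer of $J^R_{\alpha,\beta}$ and $X_{\alpha,\beta}=\sum_{r=1}^R u^r_{\alpha,\beta}(v^r_{\alpha,\beta})^T$. If $\|y-\mathcal{A}(X_{\alpha,\beta})\|_2\ge\|\eta\|_2$, then $$\sum_{r=1}^R\|u^r_{\alpha,\beta}\|_2^2\le C_{2,1}\sqrt[3]{\beta^2/\alpha^2}\sum_{r=1}^R(\|\hat u^r\|_2\|\hat v^r\|_1)^{2/3},\qquad \sum_{r=1}^R\|v^r_{\alpha,\beta}\|_1\le C_{2,1}\sqrt[3]{\alpha/\beta}\sum_{r=1}^R(\|\hat u^r\|_2\|\hat v^r\|_1)^{2/3},$$ and $$\sum_{r=1}^R(\|u^r_{\alpha,\beta}\|_2\|v^r_{\alpha,\beta}\|_1)^{2/3}\le\sum_{r=1}^R(\|\hat u^r\|_2\|\hat v^r\|_1)^{2/3}.$$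
   Context: For $y\in\mathbb{R}^m$ and $\alpha,\beta>0$, the functional $J^R_{\alpha,\beta}:(\mathbb{R}^{n_1})^R\times(\mathbb{R}^{n_2})^R\to\mathbb{R}$ is $$J^R_{\alpha,\beta}(u^1,\dots,u^R,v^1,\dots,v^R)=\Big\|y-\mathcal{A}\Big(\sum_{r=1}^Ru^r(v^r)^T\Big)\Big\|_2^2+\alpha\sum_{r=1}^R\|u^r\|_2^2+\beta\sum_{r=1}^R\|v^r\|_1.$$ The constant is $C_{2,1}=(1/2)^{2/3}+2^{1/3}$. *)

(* Defs.v *)
From Stdlib Require Import Reals Lra.
Open Scope R_scope.

Fixpoint rsum (n : nat) (f : nat -> R) : R :=
  match n with O => 0 | S k => rsum k f + f k end.

(* vectors in R^n are functions nat -> R, only indices < n matter *)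
Definition norm2 (n : nat) (u : nat -> R) : R := sqrt (rsum n (fun i => u i ^ 2)).
Definition norm1 (n : nat) (v : nat -> R) : R := rsum n (fun j => Rabs (v j)).

(* the linear map A : R^{n1 x n2} -> R^m given by its coefficients a k i j *)
Definition Amap (n1 n2 : nat) (a : nat -> nat -> nat -> R) (X : nat -> nat -> R)
  : nat -> R := fun k => rsum n1 (fun i => rsum n2 (fun j => a k i j * X i j)).

(* sum_{r<R} u^r (v^r)^T, with U r = u^r, V r = v^r *)
Definition lowrank (Rk : nat) (U V : nat -> nat -> R) : nat -> nat -> R :=
  fun i j => rsum Rk (fun r => U r i * V r j).

Definition Jfun (m n1 n2 Rk : nat) (a : nat -> nat -> nat -> R) (y : nat -> R)
  (alpha beta : R) (U V : nat -> nat -> R) : R :=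
  (norm2 m (fun k => y k - Amap n1 n2 a (lowrank Rk U V) k)) ^ 2
  + alpha * rsum Rk (fun r => (norm2 n1 (U r)) ^ 2)
  + beta * rsum Rk (fun r => norm1 n2 (V r)).

Definition pow23 (x : R) : R := if Rle_dec x 0 then 0 else Rpower x (2/3).

Definition C21 : R := Rpower (1/2) (2/3) + Rpower 2 (1/3).

(* Main.v *)
Require Import Defs.
From Stdlib Require Import Reals Lra Lia Psatz.
Open Scope R_scope.

Lemma rsum_ext n f g : (forall i, (i<n)%nat -> f i = g i) -> rsum n f = rsum n g.
Proof. induction n; simpl; intros H; [reflexivity|]. rewrite IHn by (intros; apply H; lia). rewrite H by lia. reflexivity. Qed.

Lemma rsum_le n f g : (forall i, (i<n)%nat -> f i <= g i) -> rsum n f <= rsum n g.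
Proof. induction n; simpl; intros H; [lra|]. assert (f n <= g n) by (apply H; lia).
assert (rsum n f <= rsum n g) by (apply IHn; intros; apply H; lia). lra. Qed.

Lemma rsum_plus n f g : rsum n (fun i => f i + g i) = rsum n f + rsum n g.
Proof. induction n; simpl; [lra|]. rewrite IHn; lra. Qed.

Lemma rsum_scal n c f : rsum n (fun i => c * f i) = c * rsum n f.
Proof. induction n; simpl; [lra|]. rewrite IHn; lra. Qed.

Lemma rsum_nonneg n f : (forall i, (i<n)%nat -> 0 <= f i) -> 0 <= rsum n f.
Proof. intros H. apply Rle_trans with (rsum n (fun _ => 0)).
{ clear H; induction n; simpl; lra. } apply rsum_le; auto. Qed.

Lemma rsum_zero n f : (forall i, (i<n)%nat -> 0 <= f i) -> rsum n f = 0 ->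
  forall i, (i<n)%nat -> f i = 0.
Proof. induction n; intros Hp Hs i Hi; [lia|]. simpl in Hs.
assert (0 <= rsum n f) by (apply rsum_nonneg; intros; apply Hp; lia).
assert (0 <= f n) by (apply Hp; lia).
destruct (Nat.eq_dec i n). subst; lra. apply IHn; try lra; try lia. intros; apply Hp; lia. Qed.

Lemma norm2_sq n u : norm2 n u ^ 2 = rsum n (fun i => u i ^ 2).
Proof. unfold norm2. apply pow2_sqrt. apply rsum_nonneg; intros; nra. Qed.

Lemma norm2_nonneg n u : 0 <= norm2 n u.
Proof. apply sqrt_pos. Qed.

Lemma norm1_nonneg n v : 0 <= norm1 n v.
Proof. apply rsum_nonneg; intros; apply Rabs_pos. Qed.

Lemma norm2_scal_sq n t u : norm2 n (fun i => t * u i) ^ 2 = t^2 * norm2 n u ^ 2.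
Proof. rewrite !norm2_sq, <- rsum_scal. apply rsum_ext; intros; ring. Qed.

Lemma norm1_scal n s v : norm1 n (fun j => s * v j) = Rabs s * norm1 n v.
Proof. unfold norm1. rewrite <- rsum_scal. apply rsum_ext; intros; apply Rabs_mult. Qed.

Lemma norm2_zero n u : norm2 n u = 0 -> forall i, (i<n)%nat -> u i = 0.
Proof. intros H i Hi. assert (Hs: rsum n (fun i => u i ^ 2) = 0).
{ rewrite <- norm2_sq, H. ring. }
pose proof (rsum_zero n _ (fun i _ => pow2_ge_0 (u i)) Hs i Hi). simpl in H0. nra. Qed.

Lemma norm1_zero n v : norm1 n v = 0 -> forall i, (i<n)%nat -> v i = 0.
Proof. intros H i Hi. pose proof (rsum_zero n _ (fun i _ => Rabs_pos (v i)) H i Hi).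
simpl in H0. unfold Rabs in H0; destruct Rcase_abs; lra. Qed.

Lemma pow23_nonneg x : 0 <= pow23 x.
Proof. unfold pow23; destruct Rle_dec; [lra|]. unfold Rpower; left; apply exp_pos. Qed.

Definition cb x := if Rle_dec x 0 then 0 else Rpower x (1/3).

Lemma cb_pos x : 0 < x -> 0 < cb x.
Proof. intros; unfold cb; destruct Rle_dec; [lra|]. unfold Rpower; apply exp_pos. Qed.

Lemma cb_nonneg x : 0 <= cb x.
Proof. unfold cb; destruct Rle_dec; [lra|]. unfold Rpower; left; apply exp_pos. Qed.

Lemma cb_cube x : 0 <= x -> cb x ^ 3 = x.
Proof. intros H; unfold cb; destruct Rle_dec. simpl; lra.
rewrite <- Rpower_pow by (unfold Rpower; apply exp_pos).
rewrite Rpower_mult. replace (1/3 * INR 3) with 1 by (simpl; field). apply Rpower_1; lra. Qed.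

Lemma cube_inj a b : 0 <= a -> 0 <= b -> a^3 = b^3 -> a = b.
Proof. intros Ha Hb H. destruct (Rtotal_order a b) as [H1|[H1|H1]]; auto; exfalso.
- assert (a^3 < b^3). { simpl. assert (a*a <= b*b) by nra. assert (0 < b*b*(b-a)) by (apply Rmult_lt_0_compat; nra). nra. } lra.
- assert (b^3 < a^3). { simpl. assert (b*b <= a*a) by nra. assert (0 < a*a*(a-b)) by (apply Rmult_lt_0_compat; nra). nra. } lra. Qed.

Lemma cb_unique x z : 0 <= x -> 0 <= z -> z^3 = x -> cb x = z.
Proof. intros; apply cube_inj; auto. apply cb_nonneg. rewrite cb_cube; auto. Qed.

Lemma pow23_cb x : 0 <= x -> pow23 x = cb x ^ 2.
Proof. intros; unfold pow23, cb; destruct Rle_dec; [ring|].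
replace (2/3) with (1/3+1/3) by field. rewrite Rpower_plus. ring. Qed.

Lemma Rpower_cb x : 0 < x -> Rpower x (1/3) = cb x.
Proof. intros; unfold cb; destruct Rle_dec; [lra|auto]. Qed.

Lemma cb_mult x y : 0 <= x -> 0 <= y -> cb (x*y) = cb x * cb y.
Proof. intros. apply cb_unique. nra. pose proof (cb_nonneg x); pose proof (cb_nonneg y); nra.
replace ((cb x * cb y)^3) with (cb x ^3 * cb y^3) by ring. rewrite !cb_cube; auto. Qed.
Lemma lower_bd g h w x b : 0 < g -> 0 < h -> 0 < w -> w^3 = 2 -> 0 <= x -> 0 <= b ->
  (1/w^2 + w) * g * h^2 * pow23 (x*b) <= g^3 * x^2 + h^3 * b.
Proof. intros Hg Hh Hw Hw3 Hx Hb.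
rewrite pow23_cb by nra. rewrite cb_mult by lra.
rewrite <- (cb_cube x Hx) at 2. rewrite <- (cb_cube b Hb) at 2.
set (xi := cb x). set (ze := cb b). assert (0 <= xi) by apply cb_nonneg. assert (0 <= ze) by apply cb_nonneg.
set (X := g * xi^2). set (Y := h*ze/w).
assert (E1: g^3 * (xi^3)^2 = X^3) by (unfold X; ring).
assert (E2: h^3 * ze^3 = 2 * Y^3) by (unfold Y; rewrite <- Hw3; field; lra).
assert (E3: (1/w^2+w) * g * h^2 * (xi*ze)^2 = 3 * X * Y^2).
{ unfold X, Y. replace (1/w^2+w) with ((1+w^3)/w^2) by (field; lra). rewrite Hw3. field; lra. }
rewrite E1, E2, E3.
assert (0 <= X) by (unfold X; apply Rmult_le_pos; [lra|apply pow2_ge_0]). assert (0 <= Y) by (unfold Y; apply Rmult_le_pos; [nra| left; apply Rinv_0_lt_compat; lra]).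
assert (0 <= (X-Y)^2 * (X+2*Y)) by (apply Rmult_le_pos; [apply pow2_ge_0|lra]). clearbody X Y. nra. Qed.

Definition tt g h w (p q : R) := if Rlt_dec 0 (p*q) then h * cb q / (w*g*cb p ^2) else 0.
Definition ss g h w p q := if Rlt_dec 0 (p*q) then 1 / tt g h w p q else 0.

Lemma construct n1 n2 (u v : nat -> R) g h w : 0 < g -> 0 < h -> 0 < w ->
  let t := tt g h w (norm2 n1 u) (norm1 n2 v) in
  let s := ss g h w (norm2 n1 u) (norm1 n2 v) in
  (forall i j, (i<n1)%nat -> (j<n2)%nat -> t*u i*(s*v j) = u i * v j) /\
  g^3 * norm2 n1 (fun i => t*u i)^2 + h^3 * norm1 n2 (fun j => s * v j)
   <= (1/w^2+w)*g*h^2 * pow23(norm2 n1 u * norm1 n2 v).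
Proof. intros Hg Hh Hw t s.
pose proof (norm2_nonneg n1 u) as Hp. pose proof (norm1_nonneg n2 v) as Hq.
rewrite norm2_scal_sq, norm1_scal.
set (p := norm2 n1 u) in *. set (q := norm1 n2 v) in *.
unfold t, s, ss, tt; destruct Rlt_dec as [Hpq|Hpq].
- assert (p <> 0) by (intro E; rewrite E in Hpq; lra).
  assert (q <> 0) by (intro E; rewrite E in Hpq; lra).
  assert (0 < p) by lra. assert (0 < q) by lra.
  pose proof (cb_pos p ltac:(lra)). pose proof (cb_pos q ltac:(lra)).
  assert (Ht: 0 < h * cb q / (w * g * cb p ^ 2)).
  { apply Rmult_lt_0_compat. nra. apply Rinv_0_lt_compat. apply Rmult_lt_0_compat; nra. }
  split.
  + intros i j _ _. assert (Et: h * cb q / (w * g * cb p ^ 2) * (1 / (h * cb q / (w * g * cb p ^ 2))) = 1) by (field; repeat split; nra). transitivity (h * cb q / (w * g * cb p ^ 2) * (1 / (h * cb q / (w * g * cb p ^ 2))) * (u i * v j)); [ring|rewrite Et; ring].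
  + rewrite Rabs_right by (left; apply Rmult_lt_0_compat; [lra| apply Rinv_0_lt_compat; lra]).
    rewrite pow23_cb by lra. rewrite cb_mult by lra.
    assert (Ep: p = cb p ^ 3) by (rewrite cb_cube; lra).
    assert (Eq: q = cb q ^ 3) by (rewrite cb_cube; lra).
    set (xi := cb p) in *. set (ze := cb q) in *. clearbody xi ze.
    clear Ht. rewrite Ep, Eq. right. field. repeat split; lra.
- assert (Hz: p * q = 0) by nra. split.
  + intros i j Hi Hj. destruct (Rmult_integral _ _ Hz) as [E|E].
    * rewrite (norm2_zero n1 u E i Hi). ring.
    * rewrite (norm1_zero n2 v E j Hj). ring.
  + rewrite Rabs_R0. pose proof (pow23_nonneg (p*q)).
    assert (0 <= (1/w^2+w)*g*h^2) by (apply Rmult_le_pos; [apply Rmult_le_pos|nra];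
       [ |lra]; apply Rplus_le_le_0_compat; [|lra]; unfold Rdiv; rewrite Rmult_1_l; left; apply Rinv_0_lt_compat; nra).
    nra.
Qed.

Lemma Amap_ext n1 n2 a X X' k : (forall i j, (i<n1)%nat -> (j<n2)%nat -> X i j = X' i j) ->
  Amap n1 n2 a X k = Amap n1 n2 a X' k.
Proof. intros H; unfold Amap; apply rsum_ext; intros i Hi; apply rsum_ext; intros j Hj; rewrite H; auto. Qed.

Theorem mainTheorem3 (m n1 n2 Rk : nat) (a : nat -> nat -> nat -> R)
  (alpha beta : R) (Uh Vh : nat -> nat -> R) (eta y : nat -> R)
  (U V : nat -> nat -> R) :
  (1 <= Rk)%nat -> 0 < alpha -> 0 < beta ->
  (forall k, (k < m)%nat -> y k = Amap n1 n2 a (lowrank Rk Uh Vh) k + eta k) ->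
  (forall U' V' : nat -> nat -> R,
      Jfun m n1 n2 Rk a y alpha beta U V <= Jfun m n1 n2 Rk a y alpha beta U' V') ->
  norm2 m (fun k => y k - Amap n1 n2 a (lowrank Rk U V) k) >= norm2 m eta ->
  rsum Rk (fun r => (norm2 n1 (U r)) ^ 2)
    <= C21 * Rpower (beta ^ 2 / alpha ^ 2) (1/3)
       * rsum Rk (fun r => pow23 (norm2 n1 (Uh r) * norm1 n2 (Vh r)))
  /\ rsum Rk (fun r => norm1 n2 (V r))
    <= C21 * Rpower (alpha / beta) (1/3)
       * rsum Rk (fun r => pow23 (norm2 n1 (Uh r) * norm1 n2 (Vh r)))
  /\ rsum Rk (fun r => pow23 (norm2 n1 (U r) * norm1 n2 (V r)))
    <= rsum Rk (fun r => pow23 (norm2 n1 (Uh r) * norm1 n2 (Vh r))).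
Proof.
intros HR Ha Hb Hy Hmin Hfit.
pose (g := cb alpha). pose (h := cb beta). pose (w := cb 2).
assert (Hg: 0 < g) by (apply cb_pos; lra).
assert (Hh: 0 < h) by (apply cb_pos; lra).
assert (Hw: 0 < w) by (apply cb_pos; lra).
assert (Ea: alpha = g^3) by (unfold g; rewrite cb_cube; lra).
assert (Eb: beta = h^3) by (unfold h; rewrite cb_cube; lra).
assert (Ew: w^3 = 2) by (unfold w; rewrite cb_cube; lra).
assert (HC: C21 = 1/w^2 + w).
{ unfold C21. replace (Rpower (1/2) (2/3)) with (pow23 (1/2)).
  2:{ unfold pow23; destruct Rle_dec; [lra|auto]. }
  rewrite pow23_cb by lra. rewrite Rpower_cb by lra. fold w.
  replace (cb (1/2)) with (1/w). field; lra.
  symmetry; apply cb_unique. lra. left; apply Rdiv_lt_0_compat; lra.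
  replace ((1/w)^3) with (1/w^3) by (field; lra). rewrite Ew; reflexivity. }
pose (K := C21 * g * h^2).
assert (HK: 0 < K).
{ unfold K. rewrite HC. apply Rmult_lt_0_compat; [|nra]. apply Rmult_lt_0_compat; [|lra].
  apply Rplus_lt_0_compat; [|lra]. apply Rdiv_lt_0_compat; nra. }
pose (S := rsum Rk (fun r => pow23 (norm2 n1 (Uh r) * norm1 n2 (Vh r)))).
pose (T := rsum Rk (fun r => pow23 (norm2 n1 (U r) * norm1 n2 (V r)))).
pose (Q := alpha * rsum Rk (fun r => norm2 n1 (U r) ^ 2) + beta * rsum Rk (fun r => norm1 n2 (V r))).
pose (t r := tt g h w (norm2 n1 (Uh r)) (norm1 n2 (Vh r))).
pose (s r := ss g h w (norm2 n1 (Uh r)) (norm1 n2 (Vh r))).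
pose (U' r i := t r * Uh r i). pose (V' r j := s r * Vh r j).
assert (HE: Q <= K * S).
{ specialize (Hmin U' V'). unfold Jfun in Hmin.
  assert (Hfit': norm2 m (fun k => y k - Amap n1 n2 a (lowrank Rk U' V') k) = norm2 m eta).
  { unfold norm2. f_equal. apply rsum_ext. intros k Hk. f_equal. rewrite Hy by auto.
    rewrite (Amap_ext n1 n2 a (lowrank Rk U' V') (lowrank Rk Uh Vh)). ring.
    intros i j Hi Hj. unfold lowrank. apply rsum_ext. intros r _.
    unfold U', V', t, s. apply (construct n1 n2 (Uh r) (Vh r) g h w Hg Hh Hw); auto. }
  rewrite Hfit' in Hmin.
  assert (Hsum: alpha * rsum Rk (fun r => norm2 n1 (U' r) ^ 2) + beta * rsum Rk (fun r => norm1 n2 (V' r)) <= K * S).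
  { rewrite <- !rsum_scal, <- rsum_plus. unfold S. rewrite <- rsum_scal. apply rsum_le. intros r _.
    rewrite Ea, Eb. unfold K. rewrite HC. apply (construct n1 n2 (Uh r) (Vh r) g h w Hg Hh Hw). }
  pose proof (norm2_nonneg m eta).
  assert (norm2 m eta ^ 2 <= norm2 m (fun k => y k - Amap n1 n2 a (lowrank Rk U V) k) ^ 2) by nra.
  unfold Q. lra. }
assert (HT: K * T <= Q).
{ unfold T, Q. rewrite <- !rsum_scal, <- rsum_plus. apply rsum_le. intros r _.
  rewrite Ea, Eb. unfold K. rewrite HC. apply lower_bd; auto. apply norm2_nonneg. apply norm1_nonneg. }
assert (HA: 0 <= rsum Rk (fun r => norm2 n1 (U r) ^ 2)) by (apply rsum_nonneg; intros; apply pow2_ge_0).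
assert (HB: 0 <= rsum Rk (fun r => norm1 n2 (V r))) by (apply rsum_nonneg; intros; apply norm1_nonneg).
fold S T. split; [|split].
- replace (Rpower (beta^2/alpha^2) (1/3)) with (h^2/g^2).
  2:{ rewrite Rpower_cb. symmetry; apply cb_unique. left; apply Rdiv_lt_0_compat; nra.
      left; apply Rdiv_lt_0_compat; nra. rewrite Ea, Eb. field. lra.
      apply Rdiv_lt_0_compat; nra. }
  apply Rmult_le_reg_l with alpha; auto.
  replace (alpha * (C21 * (h^2/g^2) * S)) with (K * S) by (unfold K; rewrite Ea; field; lra).
  unfold Q in HE. nra.
- replace (Rpower (alpha/beta) (1/3)) with (g/h).
  2:{ rewrite Rpower_cb. symmetry; apply cb_unique. left; apply Rdiv_lt_0_compat; nra.
      left; apply Rdiv_lt_0_compat; nra. rewrite Ea, Eb. field. lra.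
      apply Rdiv_lt_0_compat; nra. }
  apply Rmult_le_reg_l with beta; auto.
  replace (beta * (C21 * (g/h) * S)) with (K * S) by (unfold K; rewrite Eb; field; lra).
  unfold Q in HE. nra.
- apply Rmult_le_reg_l with K; auto. lra.
Qed.
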